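(* There is a constant $a_0>0$, depending only on $d$, $\Lambda$ and $\gamma$, such that for every domain $\Omega\subset\mathbb{R}^d$, every $u\in\mathcal{S}^F(\Omega)$, every $x_0\in\mathbb{R}^d$ and every $a\ge a_0$, $$L_u\big(au-|x-x_0|^\beta\big)\ge 0\qquad\text{in }\{u>0\}\cap\Omega,$$ where $\beta=\frac{2}{2-\gamma}$.
   Context: Fix $d\ge1$, $\Lambda\ge1$, $\gamma\in(1,2)$. $\mathcal{S}_d$ is the space of real symmetric $d\times d$ matrices. Standing assumptions on $F:\mathcal{S}_d\to\mathbb{R}$: (i) uniform ellipticity: $\frac1\Lambda\|P\|\le F(M+P)-F(M)\le\Lambda\|P\|$ for all $M,P\in\mathcal{S}_d$, $P\ge0$; (ii) $F$ is convex, $F(0)=0$, and the trace map is a sub-differential of $F$ at $0$; (iii) either $F$ is (Gâteaux) differentiable at $0$, or $F(\lambda M)=\lambda F(M)$ for all $\lambda>0$, $M\in\mathcal{S}_d$. A sub-differential of $F$ at $A$ is a linear map $S_A:\mathcal{S}_d\to\mathbb{R}$ with $S_A(M)\le F(A+M)-F(A)$ for all $M$. $\mathcal{S}^F(\Omega)$ is the class of continuous (viscosity, hence classical) solutions of $F(D^2u)=u^{\gamma-1}$, $u\ge0$ in $\Omega$. The linearized operator is $L_u(w)=S_{D^2u}(D^2w)-(\gamma-1)u^{\gamma-2}w$ in $\{u>0\}\cap\Omega$, where at each point $x$, $S_{D^2u}$ is a sub-differential of $F$ at $D^2u(x)$. *)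

(* Defs.v *)
From HB Require Import structures.
From mathcomp Require Import all_boot all_order all_algebra.
From mathcomp Require Import all_classical all_reals all_analysis.
Set Implicit Arguments. Unset Strict Implicit. Unset Printing Implicit Defensive.
Import Order.TTheory GRing.Theory Num.Theory.
Import numFieldNormedType.Exports.
Local Open Scope classical_set_scope.
Local Open Scope ring_scope.

Section Defs.
Variables (R : realType) (d : nat).

Definition symm (M : 'M[R]_d) : Prop := M^T = M.
Definition psd (P : 'M[R]_d) : Prop :=
  symm P /\ forall v : 'rV[R]_d, 0 <= (v *m P *m v^T) 0 0.

Definition enorm (v : 'rV[R]_d) : R := Num.sqrt (\sum_(i < d) (v 0 i) ^+ 2).

Definition opnorm (P : 'M[R]_d) : R :=
  sup [set enorm (v *m P) | v in [set v : 'rV[R]_d | enorm v <= 1]].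

(* linear maps S_d -> R (only their values on S_d matter) *)
Definition linear_on_sym (S : 'M[R]_d -> R) : Prop :=
  forall (c : R) (M N : 'M[R]_d), symm M -> symm N ->
    S (c *: M + N) = c * S M + S N.

Definition subdifferential (F S : 'M[R]_d -> R) (A : 'M[R]_d) : Prop :=
  linear_on_sym S /\ forall M, symm M -> S M <= F (A + M) - F A.

Definition unif_elliptic (Lam : R) (F : 'M[R]_d -> R) : Prop :=
  forall M P, symm M -> psd P ->
    opnorm P / Lam <= F (M + P) - F M /\ F (M + P) - F M <= Lam * opnorm P.

Definition convex_on_sym (F : 'M[R]_d -> R) : Prop :=
  forall (t : R) M N, symm M -> symm N -> 0 <= t <= 1 ->
    F (t *: M + (1 - t) *: N) <= t * F M + (1 - t) * F N.

Definition gateaux_diff_at0 (F : 'M[R]_d -> R) : Prop :=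
  (forall M, symm M -> derivable (fun t : R => F (t *: M)) 0 1) /\
  linear_on_sym (fun M => 'D_1 (fun t : R => F (t *: M)) 0).

Definition pos_homogeneous (F : 'M[R]_d -> R) : Prop :=
  forall (l : R) M, symm M -> 0 < l -> F (l *: M) = l * F M.

Definition standing_assumptions (Lam : R) (F : 'M[R]_d -> R) : Prop :=
  [/\ unif_elliptic Lam F,
      convex_on_sym F /\ F 0 = 0 /\ subdifferential F (fun M => \tr M) 0
    & gateaux_diff_at0 F \/ pos_homogeneous F].

Definition evec (i : 'I_d) : 'rV[R]_d := delta_mx 0 i.

Definition hess (u : 'rV[R]_d -> R) (x : 'rV[R]_d) : 'M[R]_d :=
  \matrix_(i, j) 'D_(evec j) ('D_(evec i) u) x.

Definition C2_on (Om : set 'rV[R]_d) (u : 'rV[R]_d -> R) : Prop :=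
  forall x, Om x ->
    differentiable u x /\
    (forall i, differentiable ('D_(evec i) u) x) /\
    (forall i j, {for x, continuous ('D_(evec j) ('D_(evec i) u))}).

Definition SF (gam : R) (F : 'M[R]_d -> R) (Om : set 'rV[R]_d)
    (u : 'rV[R]_d -> R) : Prop :=
  C2_on Om u /\
  forall x, Om x -> 0 <= u x /\ F (hess u x) = u x `^ (gam - 1).

(* the linearized operator at x, with sub-differential S of F at D^2u(x) *)
Definition Lu (gam : R) (S : 'M[R]_d -> R) (u w : 'rV[R]_d -> R)
    (x : 'rV[R]_d) : R :=
  S (hess w x) - (gam - 1) * u x `^ (gam - 2) * w x.

Definition domain (Om : set 'rV[R]_d) : Prop := open Om /\ connected Om.

End Defs.

(* Main.v *)
Require Import Defs.
From HB Require Import structures.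
From mathcomp Require Import all_boot all_order all_algebra.
From mathcomp Require Import all_classical all_reals all_analysis.
Import Order.TTheory GRing.Theory Num.Theory.
Import numFieldNormedType.Exports.
Local Open Scope classical_set_scope.
Local Open Scope ring_scope.
From mathcomp Require Import ring lra.

Module Helpers.
Set Implicit Arguments. Unset Strict Implicit. Unset Printing Implicit Defensive.
Section Aux.
Variable R : realType.
Variables (V : normedModType R).

Lemma line_fun (W : normedModType R) (f : V -> W) a v t :
  (fun h : R => h^-1 *: (((fun s : R => f (s *: v + a)) \o shift t) (h *: 1) - f (t *: v + a)))
  = (fun h => h^-1 *: ((f \o shift (t *: v + a)) (h *: v) - f (t *: v + a))).
Proof.
apply/funext => h /=. by rewrite /shift /= [h *: 1]mulr1 scalerDl addrA.
Qed.

Lemma line_derivable (W : normedModType R) (f : V -> W) a v t :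
  derivable f (t *: v + a) v <-> derivable (fun s : R => f (s *: v + a)) t 1.
Proof. by rewrite /derivable line_fun. Qed.

Lemma line_derive (W : normedModType R) (f : V -> W) a v t :
  'D_v f (t *: v + a) = 'D_1 (fun s : R => f (s *: v + a)) t.
Proof. by rewrite /derive line_fun. Qed.

Lemma line_is_derive (f : V -> R) a v t : derivable f (t *: v + a) v ->
  is_derive t 1 (fun s : R => f (s *: v + a)) ('D_v f (t *: v + a)).
Proof.
move=> h; have h1 := (line_derivable f a v t).1 h.
rewrite line_derive; exact: derivableP h1.
Qed.

Lemma mvt2 (f : V -> R) (x p q : V) (h : R) : 0 < h ->
 (forall t, 0 <= t <= h -> derivable f (t *: p + x) p /\ derivable f (t *: p + (h *: q + x)) p) ->
 (forall t s, 0 <= t <= h -> 0 <= s <= h -> derivable ('D_p f) (s *: q + (t *: p + x)) q) ->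
 exists t s, [/\ 0 <= t <= h, 0 <= s <= h &
   f (h *: p + (h *: q + x)) - f (h *: p + x) - f (h *: q + x) + f x
     = h * h * 'D_q ('D_p f) (s *: q + (t *: p + x))].
Proof.
move=> h0 H1 H2.
pose g1 := fun t : R => f (t *: p + (h *: q + x)).
pose g2 := fun t : R => f (t *: p + x).
have dg : forall t, t \in `[0, h] -> is_derive t 1 (g1 - g2)
   ('D_p f (t *: p + (h *: q + x)) - 'D_p f (t *: p + x)).
  move=> t; rewrite in_itv /= => /H1 [d1 d2].
  exact: (is_deriveB (line_is_derive d2) (line_is_derive d1)).
pose dg1 := fun t => 'D_p f (t *: p + (h *: q + x)) - 'D_p f (t *: p + x).
have M1 : forall t, t \in `]0, h[ -> is_derive t 1 (g1 - g2) (dg1 t).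
  move=> t; rewrite in_itv /= => /andP [t0 th]; apply: dg.
  by rewrite in_itv /= !ltW.
have C1 : {within `[0, h], continuous (g1 - g2)}.
  apply: derivable_within_continuous => t tin.
  by have [] := dg t tin.
have [c c0h Hc] := MVT h0 M1 C1.
move: c0h; rewrite in_itv /= => /andP [c0 ch].
have hc : 0 <= c <= h by rewrite !ltW.
pose phi := fun s : R => 'D_p f (s *: q + (c *: p + x)).
pose dphi := fun s : R => 'D_q ('D_p f) (s *: q + (c *: p + x)).
have M2 : forall t, t \in `]0, h[ -> is_derive t 1 phi (dphi t).
  move=> t; rewrite in_itv /= => /andP [t0 th]; apply: line_is_derive.
  by apply: H2; rewrite ?ltW.
have C2 : {within `[0, h], continuous phi}.
  apply: derivable_within_continuous => t; rewrite in_itv /= => /andP [t0 th].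
  have tt : 0 <= t <= h by rewrite t0 th.
  exact: ((line_derivable ('D_p f) (c *: p + x) q t).1 (H2 _ _ hc tt)).
have [e e0h He] := MVT h0 M2 C2.
move: e0h; rewrite in_itv /= => /andP [e0 eh].
exists c, e; split; [by [] | by rewrite !ltW | ].
have Hc' : g1 h - g2 h - (g1 0 - g2 0) = dg1 c * (h - 0) := Hc.
move: Hc' He; rewrite /phi /g1 /g2 /dg1 /dphi !scale0r !add0r !subr0 => Hc' He.
have E : c *: p + (h *: q + x) = h *: q + (c *: p + x) by rewrite addrCA.
rewrite E He in Hc'.
set D := 'D_q ('D_p f) _.
have -> : h * h * D = D * h * h by ring.
rewrite -Hc'; ring.
Qed.


Lemma eq_of_small (A B : R) : (forall e, 0 < e -> `|A - B| < e + e) -> A = B.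
Proof.
move=> H; apply/eqP; rewrite -subr_eq0 -normr_le0.
case: (lerP `|A - B| 0) => // hp.
have := H (`|A - B| / 4) (divr_gt0 hp (ltr0n _ 4)); lra.
Qed.

Lemma clairaut (f : V -> R) (x p q : V) :
  (\forall y \near x, differentiable f y /\ differentiable ('D_p f) y /\ differentiable ('D_q f) y) ->
  {for x, continuous ('D_q ('D_p f))} -> {for x, continuous ('D_p ('D_q f))} ->
  'D_q ('D_p f) x = 'D_p ('D_q f) x.
Proof.
move=> Hd C1 C2; apply: eq_of_small => e e0.
have N1 := @cvgr_distC_lt _ _ _ _ _ _ _ C1 _ e0.
have N2 := @cvgr_distC_lt _ _ _ _ _ _ _ C2 _ e0.
have {N1}N1 := N1 (nbhs_filter x).
have {N2}N2 := N2 (nbhs_filter x).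
have : \forall y \near x, (differentiable f y /\ differentiable ('D_p f) y /\ differentiable ('D_q f) y)
   /\ `|'D_q ('D_p f) y - 'D_q ('D_p f) x| < e /\ `|'D_p ('D_q f) y - 'D_p ('D_q f) x| < e.
  apply: filter_app N2; apply: filter_app N1; apply: filter_app Hd.
  by apply: filterE => y a b c; split; [exact: a | split; [exact: b | exact: c]].
move=> /nbhs_ballP [r r0 Br].
pose h := r / (`|p| + `|q| + 1).
have h0 : 0 < h by apply: divr_gt0 => //; rewrite ltr_wpDl ?addr_ge0.
have inB : forall t s, 0 <= t <= h -> 0 <= s <= h -> ball x r (t *: p + (s *: q + x)).
  move=> t s /andP [t0 th] /andP [s0 sh].
  rewrite -ball_normE /= addrA opprD addrCA subrr addr0 normrN.
  apply: (le_lt_trans (ler_normD _ _)); rewrite !normrZ !ger0_norm //.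
  apply: (@le_lt_trans _ _ (h * `|p| + h * `|q|)).
    by rewrite lerD // ler_wpM2r.
  rewrite -mulrDr /h mulrC mulrA ltr_pdivrMr; last by rewrite ltr_wpDl ?addr_ge0.
  by rewrite mulrC ltr_pM2l // ltrDl ltr01.
have h0h : (0:R) <= 0 <= h by apply/andP; split; [exact: lexx | exact: ltW].
have P (t s : R) (ht : 0 <= t <= h) (hs : 0 <= s <= h) := Br _ (inB t s ht hs).
have hhh : 0 <= h <= h by apply/andP; split; [exact: ltW | exact: lexx].
have K1 : forall t, 0 <= t <= h ->
    derivable f (t *: p + x) p /\ derivable f (t *: p + (h *: q + x)) p.
  move=> t ht; split.
    have := P t 0 ht h0h; rewrite scale0r add0r => -[[df _] _]; exact: diff_derivable.
  have := P t h ht hhh => -[[df _] _]; exact: diff_derivable.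
have K2 : forall t s, 0 <= t <= h -> 0 <= s <= h ->
    derivable ('D_p f) (s *: q + (t *: p + x)) q.
  move=> t s ht hs; have := P t s ht hs; rewrite addrCA => -[[_ [dp _]] _].
  exact: diff_derivable.
have A3 : forall t, 0 <= t <= h ->
    derivable f (t *: q + x) q /\ derivable f (t *: q + (h *: p + x)) q.
  move=> t ht; split.
    have := P 0 t h0h ht; rewrite scale0r add0r => -[[df _] _]; exact: diff_derivable.
  have := P h t hhh ht; rewrite addrCA => -[[df _] _]; exact: diff_derivable.
have A4 : forall t s, 0 <= t <= h -> 0 <= s <= h ->
    derivable ('D_q f) (s *: p + (t *: q + x)) p.
  move=> t s ht hs; have := P s t hs ht => -[[_ [_ dq]] _].
  exact: diff_derivable.
have [t1 [s1 [ht1 hs1 E1]]] := mvt2 h0 K1 K2.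
have [t2 [s2 [ht2 hs2 E2]]] := mvt2 h0 A3 A4.
have := P t1 s1 ht1 hs1; rewrite addrCA => -[_ [B1 _]].
have := P s2 t2 hs2 ht2 => -[_ [_ B2]].
set Q1 := 'D_q ('D_p f) (s1 *: q + (t1 *: p + x)) in E1 B1.
set Q2 := 'D_p ('D_q f) (s2 *: p + (t2 *: q + x)) in E2 B2.
have EA : Q1 = Q2.
  have hn : h * h != 0 by rewrite mulf_neq0 // gt_eqF.
  apply: (mulfI hn); rewrite -E1 -E2 (addrCA (h *: q)); congr (_ + _); exact: addrAC.
rewrite EA in B1.
rewrite (_ : 'D_q ('D_p f) x - 'D_p ('D_q f) x = ('D_q ('D_p f) x - Q2) + (Q2 - 'D_p ('D_q f) x)); last by rewrite addrA subrK.
have B1' : `|'D_q ('D_p f) x - Q2| < e by rewrite distrC.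
exact: (le_lt_trans (ler_normD _ _) (ltrD B1' B2)).
Qed.
End Aux.

Section OneD.
Variable R : realType.

Lemma is_derive0_cvg (f : R -> R) (L : R) :
  (fun h => h^-1 * (f h - f 0)) @ 0^' --> L -> is_derive (0:R) (1:R) f L.
Proof.
move=> H.
have E : (fun h : R => h^-1 *: ((f \o shift 0) (h *: 1) - f 0)) = (fun h => h^-1 * (f h - f 0)).
  by apply/funext => h; rewrite /shift /= addr0 [h *: 1]mulr1.
split; first by rewrite /derivable E; apply/cvg_ex; exists L.
by rewrite /derive E; exact: cvg_lim.
Qed.

Lemma sq_cvg0 : (fun h : R => h ^+ 2) @ 0^' --> (0 : R)^'+.
Proof.
have c0 : (fun h : R => h ^+ 2) @ 0 --> (0 : R).
  have -> : (fun h : R => h ^+ 2) = (fun h => h) \* (fun h => h) by apply/funext => h; rewrite expr2.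
  by rewrite -[X in _ --> X](mulr0 (0:R)); apply: cvgM; exact: cvg_id.
move=> P /= HP.
have := c0 _ HP; rewrite /= => H.
have := @nbhs_dnbhs_neq R 0.
have H' := @nbhs_dnbhs R 0 _ H.
apply: filter_app; apply: filterS H' => h Hh hn0.
by apply: Hh; rewrite exprn_even_gt0.
Qed.

Lemma powR_sq_cvg0 (q : R) : 0 < q -> (fun h : R => (h ^+ 2) `^ q) @ 0^' --> (0 : R).
Proof.
move=> q0; exact: (@cvg_comp _ _ _ _ _ _ _ _ sq_cvg0 (powR_cvg0 q0)).
Qed.


Lemma comp_is_derive (f g : R -> R) (x df dg : R) :
  is_derive x 1 f df -> is_derive (f x) 1 g dg -> is_derive x 1 (g \o f) (dg * df).
Proof.
move=> [d1 v1] [d2 v2].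
have dc : derivable (g \o f) x 1.
  by apply/derivable1_diffP; apply: differentiable_comp; apply/derivable1_diffP.
split => //.
have E := derive1_comp d1 d2.
rewrite derive1E in E; rewrite E.
by rewrite !derive1E v1 v2.
Qed.

Lemma cvg_near_eq0 (f g : R -> R) (L : R) :
  (\forall h \near (0:R)^', h != 0 -> f h = g h) -> g @ 0^' --> L -> f @ 0^' --> L.
Proof.
move=> E H; apply: cvg_trans H; apply: near_eq_cvg.
have := @nbhs_dnbhs_neq R 0; apply: filter_app; apply: filterS E => h Hh hn.
by rewrite Hh.
Qed.

Lemma is_derive_quad (c b : R) :
  is_derive (0:R) 1 (fun t : R => c + 2 * b * t + t ^+ 2) (2 * b).
Proof.
apply: is_derive0_cvg.
apply: (@cvg_near_eq0 _ (fun h => 2 * b + h)).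
  by apply: filterE => h hn; rewrite expr2; field.
rewrite -[X in _ --> X](addr0 (2 * b)).
apply: cvg_within_filter; apply: cvgD; [exact: cvg_cst | exact: cvg_id].
Qed.

Lemma is_derive_lin (a dl : R) :
  is_derive (0:R) 1 (fun t : R => a + t * dl) dl.
Proof.
apply: is_derive0_cvg.
apply: (@cvg_near_eq0 _ (fun h => dl)).
  by apply: filterE => h hn; field.
apply: cvg_within_filter; exact: cvg_cst.
Qed.

Lemma sq_le0 (b : R) : b ^+ 2 <= 0 -> b = 0.
Proof.
move=> h; apply/eqP; rewrite -sqrf_eq0 eq_le h /=; exact: sqr_ge0.
Qed.

Lemma derA_pos (c b p : R) : 0 < c ->
  is_derive (0:R) 1 (fun t : R => (c + 2 * b * t + t ^+ 2) `^ p) (2 * p * c `^ (p - 1) * b).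
Proof.
move=> cp.
pose g := fun t : R => c + 2 * b * t + t ^+ 2.
have g0 : g 0 = c by rewrite /g mulr0 addr0 expr0n /= addr0.
have Hp : is_derive (g 0) (1:R) (fun x : R => x `^ p) (p * (g 0) `^ (p - 1)).
  by apply: is_derive1_powR; rewrite g0.
have H := comp_is_derive (is_derive_quad c b) Hp.
apply: is_derive_eq H _; rewrite g0; ring.
Qed.

Lemma derA (c b p : R) : 0 <= c -> b ^+ 2 <= c -> 1 < p ->
  is_derive (0:R) 1 (fun t : R => (c + 2 * b * t + t ^+ 2) `^ p) (2 * p * c `^ (p - 1) * b).
Proof.
move=> c0 bc p1.
case: (ltrP 0 c) => cp.
  exact: derA_pos.
have c00 : c = 0 by apply/eqP; rewrite eq_le cp c0.
subst c; have b0 := sq_le0 bc; subst b.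
have p0 : p != 0 by rewrite gt_eqF // (lt_trans ltr01 p1).
have pp : 0 < p - 1 by rewrite subr_gt0.
have -> : 2 * p * 0 `^ (p - 1) * 0 = 0 by rewrite mulr0.
apply: is_derive0_cvg.
apply: (@cvg_near_eq0 _ ((fun h : R => h) \* (fun h : R => (h ^+ 2) `^ (p - 1)))).
  apply: filterE => h hn /=.
  rewrite !mulr0 !mul0r !add0r expr0n /= powR0 // subr0.
  rewrite -(mulr_powRB1 (sqr_ge0 h) (lt_trans ltr01 p1)).
  by rewrite expr2; field.
rewrite -[X in _ --> X](mulr0 (0:R)); apply: cvgM.
  by apply: cvg_within_filter; exact: cvg_id.
exact: powR_sq_cvg0.
Qed.


Lemma derB (c a b dl q : R) : 0 <= c -> a ^+ 2 <= c -> b ^+ 2 <= c -> 0 < q ->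
  is_derive (0:R) 1 (fun t : R => (c + 2 * b * t + t ^+ 2) `^ q * (a + t * dl))
    (2 * q * c `^ (q - 1) * b * a + c `^ q * dl).
Proof.
move=> c0 ac bc q0.
case: (ltrP 0 c) => cp.
  have HF := derA_pos b q cp.
  have HG := is_derive_lin a dl.
  have H := is_deriveM HF HG.
  apply: is_derive_eq H _.
  rewrite /= mulr0 addr0 expr0n /= addr0 mul0r addr0.
  rewrite /GRing.scale /=; ring.
have c00 : c = 0 by apply/eqP; rewrite eq_le cp c0.
subst c; have b0 := sq_le0 bc; have a0 := sq_le0 ac; subst a b.
have q0' : q != 0 by rewrite gt_eqF.
have -> : 2 * q * 0 `^ (q - 1) * 0 * 0 + 0 `^ q * dl = 0 by rewrite (powR0 q0'); ring.
apply: is_derive0_cvg.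
apply: (@cvg_near_eq0 _ ((fun h : R => (h ^+ 2) `^ q) \* (fun _ => dl))).
  apply: filterE => h hn /=.
  rewrite !mulr0 !mul0r !add0r expr0n /= powR0 // mul0r subr0.
  by field.
rewrite -[X in _ --> X](mul0r dl); apply: cvgM.
  exact: powR_sq_cvg0.
apply: cvg_within_filter; exact: cvg_cst.
Qed.
End OneD.

Section Multi.
Variable R : realType.
Variables (d : nat) (x0 : 'rV[R]_d).

Definition zc (y : 'rV[R]_d) (k : 'I_d) := (y - x0) 0 k.
Definition sq (y : 'rV[R]_d) := \sum_k zc y k ^+ 2.

Lemma zc_line (y : 'rV[R]_d) j k (t : R) :
  zc (t *: evec R j + y) k = zc y k + t * (k == j)%:R.
Proof. rewrite /zc /evec !mxE eqxx /=; ring. Qed.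

Lemma sq_ge0 y : 0 <= sq y.
Proof. by apply: sumr_ge0 => k _; exact: sqr_ge0. Qed.

Lemma zc_sq_le y i : zc y i ^+ 2 <= sq y.
Proof.
rewrite /sq (bigD1 i) //= lerDl; apply: sumr_ge0 => k _; exact: sqr_ge0.
Qed.

Lemma sq_line y i (t : R) : sq (t *: evec R i + y) = sq y + 2 * zc y i * t + t ^+ 2.
Proof.
rewrite /sq (bigD1 i) //= [in RHS](bigD1 i) //=.
have -> : \sum_(k | k != i) zc (t *: evec R i + y) k ^+ 2 = \sum_(k | k != i) zc y k ^+ 2.
  by apply: eq_bigr => k ki; rewrite zc_line (negbTE ki) mulr0 addr0.
rewrite zc_line eqxx /= mulr1; ring.
Qed.

Lemma enorm_sq y (b : R) : enorm (y - x0) `^ b = sq y `^ (b / 2).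
Proof.
rewrite /enorm -powR12_sqrt; last exact: sq_ge0.
by rewrite -powRrM mulrC.
Qed.


Lemma line_is_derive_inv (f : 'rV[R]_d -> R) a v (L : R) :
  is_derive (0:R) 1 (fun t : R => f (t *: v + a)) L -> is_derive a v f L.
Proof.
move=> [dd ee]; have E : (0:R) *: v + a = a by rewrite scale0r add0r.
split.
  by have := (line_derivable f a v 0).2 dd; rewrite E.
by have := line_derive f a v 0; rewrite E => ->.
Qed.

Variable p : R.
Hypothesis p1 : 1 < p.

Definition Wf (y : 'rV[R]_d) := sq y `^ p.
Definition Gf (i : 'I_d) (y : 'rV[R]_d) := 2 * p * sq y `^ (p - 1) * zc y i.

Lemma Dw y i : is_derive y (evec R i) Wf (Gf i y).
Proof.
apply: line_is_derive_inv.
have -> : (fun t : R => Wf (t *: evec R i + y)) =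
   (fun t : R => (sq y + 2 * zc y i * t + t ^+ 2) `^ p).
  by apply/funext => t; rewrite /Wf sq_line.
exact: derA (sq_ge0 y) (zc_sq_le y i) p1.
Qed.

Lemma DW_eq i : 'D_(evec R i) Wf = Gf i.
Proof. by apply/funext => y; have [_ ->] := Dw y i. Qed.

Definition HGf (i j : 'I_d) (y : 'rV[R]_d) :=
  2 * p * (2 * (p - 1) * sq y `^ (p - 1 - 1) * zc y j * zc y i + sq y `^ (p - 1) * (i == j)%:R).

Lemma DG y i j : is_derive y (evec R j) (Gf i) (HGf i j y).
Proof.
apply: line_is_derive_inv.
have pq : 0 < p - 1 by rewrite subr_gt0.
have H := derB ((i == j)%:R) (sq_ge0 y) (zc_sq_le y i) (zc_sq_le y j) pq.
have H2 := is_deriveZ (2 * p) H.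
have -> : (fun t : R => Gf i (t *: evec R j + y)) =
   (2 * p) *: (fun t : R => (sq y + 2 * zc y j * t + t ^+ 2) `^ (p - 1) * (zc y i + t * (i == j)%:R)).
  apply/funext => t; rewrite /Gf sq_line zc_line /=.
  by rewrite scalrfctE -mulrA.
apply: is_derive_eq H2 _.
rewrite /HGf /GRing.scale /=; ring.
Qed.


Lemma hessW x : hess Wf x =
  (4 * p * (p - 1) * sq x `^ (p - 1 - 1)) *: ((x - x0)^T *m (x - x0)) +
  (2 * p * sq x `^ (p - 1)) *: 1%:M.
Proof.
apply/matrixP => i j; rewrite !mxE DW_eq big_ord1 !mxE.
have [_ ->] := DG x i j.
rewrite /HGf /zc !mxE; ring.
Qed.

End Multi.

Section Mat.
Variable R : realType.
Variable d : nat.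

Lemma cs (v z : 'I_d -> R) :
  (\sum_k v k * z k) ^+ 2 <= (\sum_k v k ^+ 2) * (\sum_k z k ^+ 2).
Proof.
rewrite expr2 !big_distrlr /=.
have E : \sum_i \sum_j v i ^+ 2 * z j ^+ 2 = \sum_i \sum_j v j ^+ 2 * z i ^+ 2 :> R.
  by rewrite exchange_big.
rewrite -(@ler_pM2l _ 2) //.
have -> : 2 * (\sum_i \sum_j v i ^+ 2 * z j ^+ 2) =
    \sum_i \sum_j (v i ^+ 2 * z j ^+ 2 + v j ^+ 2 * z i ^+ 2).
  rewrite mulrDl mul1r [X in _ + X]E -big_split /=.
  by apply: eq_bigr => i _; rewrite -big_split.
rewrite mulr_sumr; apply: ler_sum => i _; rewrite mulr_sumr; apply: ler_sum => j _.
rewrite -subr_ge0.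
have -> : v i ^+ 2 * z j ^+ 2 + v j ^+ 2 * z i ^+ 2 - 2 * (v i * z i * (v j * z j)) =
   (v i * z j - v j * z i) ^+ 2 by ring.
exact: sqr_ge0.
Qed.


Lemma enormZ (k : R) (z : 'rV[R]_d) : enorm (k *: z) = `|k| * enorm z.
Proof.
rewrite /enorm.
have -> : \sum_(i < d) ((k *: z) 0 i) ^+ 2 = k ^+ 2 * \sum_(i < d) (z 0 i) ^+ 2.
  by rewrite mulr_sumr; apply: eq_bigr => i _; rewrite mxE exprMn.
by rewrite sqrtrM ?sqr_ge0 // sqrtr_sqr.
Qed.

Lemma enorm_ge0 (z : 'rV[R]_d) : 0 <= enorm z.
Proof. exact: sqrtr_ge0. Qed.

Lemma enorm0 : enorm (0 : 'rV[R]_d) = 0.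
Proof.
rewrite /enorm (_ : \sum_(i < d) _ = 0) ?sqrtr0 //.
by apply: big1 => i _; rewrite mxE expr0n.
Qed.

Lemma enorm_sqr (z : 'rV[R]_d) : enorm z ^+ 2 = \sum_(i < d) (z 0 i) ^+ 2.
Proof. by rewrite /enorm sqr_sqrtr // sumr_ge0 // => i _; exact: sqr_ge0. Qed.

Lemma vzT (v z : 'rV[R]_d) : (v *m z^T) 0 0 = \sum_k v 0 k * z 0 k.
Proof. by rewrite mxE; apply: eq_bigr => k _; rewrite mxE. Qed.

Lemma abs_dot (v z : 'rV[R]_d) : `|(v *m z^T) 0 0| <= enorm v * enorm z.
Proof.
rewrite vzT -sqrtr_sqr /enorm -sqrtrM; last by apply: sumr_ge0 => i _; exact: sqr_ge0.
rewrite ler_sqrt; first exact: (cs (fun k => v 0 k) (fun k => z 0 k)).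
by apply: mulr_ge0; apply: sumr_ge0 => i _; exact: sqr_ge0.
Qed.

Lemma opnorm_le (P : 'M[R]_d) (c : R) :
  (forall v, enorm v <= 1 -> enorm (v *m P) <= c) -> opnorm P <= c.
Proof.
move=> H; apply: ge_sup.
  by exists (enorm (0 *m P)), 0 => //=; rewrite enorm0 ler01.
by move=> _ [v hv <-]; exact: H.
Qed.

Lemma opnorm1 : opnorm (1%:M : 'M[R]_d) <= 1.
Proof. apply: opnorm_le => v hv. rewrite mulmx1. exact: hv. Qed.

Lemma mulZZ (v z : 'rV[R]_d) : v *m (z^T *m z) = (v *m z^T) 0 0 *: z.
Proof. rewrite mulmxA. rewrite {1}(mx11_scalar (v *m z^T)). by rewrite mul_scalar_mx. Qed.

Lemma opnormZZ (z : 'rV[R]_d) : opnorm (z^T *m z) <= \sum_(i < d) (z 0 i) ^+ 2.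
Proof.
apply: opnorm_le => v hv; rewrite mulZZ enormZ -enorm_sqr expr2.
apply: ler_wpM2r; first exact: enorm_ge0.
apply: (le_trans (abs_dot v z)).
by rewrite -[X in _ <= X]mul1r; apply: ler_wpM2r => //; exact: enorm_ge0.
Qed.

Lemma symm1 : symm (1%:M : 'M[R]_d).
Proof. by rewrite /symm tr_scalar_mx. Qed.

Lemma symmZZ (z : 'rV[R]_d) : symm (z^T *m z).
Proof. by rewrite /symm trmx_mul trmxK. Qed.

Lemma symmD (A B : 'M[R]_d) : symm A -> symm B -> symm (A + B).
Proof. by rewrite /symm => hA hB; rewrite linearD /= hA hB. Qed.

Lemma symmZ (k : R) (A : 'M[R]_d) : symm A -> symm (k *: A).
Proof. by rewrite /symm => hA; rewrite linearZ /= hA. Qed.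

Lemma symmN (A : 'M[R]_d) : symm A -> symm (- A).
Proof. by rewrite /symm => hA; rewrite linearN /= hA. Qed.

Lemma symm0 : symm (0 : 'M[R]_d).
Proof. by rewrite /symm trmx0. Qed.

Lemma psd1 : psd (1%:M : 'M[R]_d).
Proof.
split; first exact: symm1.
move=> v; rewrite mulmx1 vzT; apply: sumr_ge0 => k _; rewrite -expr2; exact: sqr_ge0.
Qed.

Lemma psdZZ (z : 'rV[R]_d) : psd (z^T *m z).
Proof.
split; first exact: symmZZ.
move=> v; rewrite mulZZ -scalemxAl mxE.
have -> : (z *m v^T) 0 0 = (v *m z^T) 0 0 by rewrite !vzT; apply: eq_bigr => k _; rewrite mulrC.
rewrite -expr2; exact: sqr_ge0.
Qed.

End Mat.

Section Scal.
Variable R : realType.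

Definition Kc (C0 gam : R) := Num.max 1 ((C0 / (gam - 1)) `^ (2 - gam)^-1).

Lemma powmono (r x y : R) : 0 <= r -> 0 <= x -> x <= y -> x `^ r <= y `^ r.
Proof.
move=> r0 x0 xy; apply: (ge0_ler_powR r0) => //; rewrite nnegrE //.
exact: le_trans xy.
Qed.

Lemma SL (gam C0 a U T : R) : 1 < gam < 2 -> 0 <= C0 -> 0 < U -> 0 <= T ->
  C0 * Kc C0 gam / (2 - gam) <= a ->
  C0 * T `^ (gam - 1) <= a * (2 - gam) * U `^ (gam - 1) + (gam - 1) * U `^ (gam - 2) * T.
Proof.
move=> /andP [g1 g2] C00 U0 T0 ha.
set K := Kc C0 gam.
have K1 : 1 <= K by rewrite /K /Kc le_max lexx.
have K0 : 0 < K by apply: lt_le_trans K1.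
have g2p : 0 < 2 - gam by rewrite subr_gt0.
have g1p : 0 < gam - 1 by rewrite subr_gt0.
have aK : C0 * K <= a * (2 - gam) by rewrite -ler_pdivrMr.
have a0 : 0 <= a by apply: le_trans ha; apply: divr_ge0; [apply: mulr_ge0 => //; exact: ltW | exact: ltW].
have e1 : 0 <= U `^ (gam - 1) by exact: powR_ge0.
have e2 : 0 <= U `^ (gam - 2) by exact: powR_ge0.
have t1 : 0 <= T `^ (gam - 1) by exact: powR_ge0.
case: (lerP T (K * U)) => hT.
  have H1 : T `^ (gam - 1) <= K * U `^ (gam - 1).
    apply: (le_trans (powmono (ltW g1p) T0 hT)).
    rewrite powRM ?(ltW K0) ?(ltW U0) //; apply: ler_wpM2r => //.
    by apply: ler1_powR => //; rewrite lerBlDr; apply: ltW; rewrite (lt_le_trans g2) // -lerBlDl; rewrite (_ : 2 - 1 = 1) //; lra.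
  have H2 : C0 * T `^ (gam - 1) <= a * (2 - gam) * U `^ (gam - 1).
    apply: (le_trans (ler_wpM2l C00 H1)); rewrite mulrA; exact: ler_wpM2r.
  apply: (le_trans H2); rewrite lerDl; apply: mulr_ge0 => //; apply: mulr_ge0 => //; exact: ltW.
have T0' : 0 < T by apply: lt_trans hT; exact: mulr_gt0.
set M := (C0 / (gam - 1)) `^ (2 - gam)^-1.
have MK : M <= K by rewrite /K /Kc le_max lexx orbT.
have M0 : 0 <= M by exact: powR_ge0.
have c0 : 0 <= C0 / (gam - 1) by apply: divr_ge0 => //; exact: ltW.
have KM : C0 / (gam - 1) <= K `^ (2 - gam).
  have -> : C0 / (gam - 1) = M `^ (2 - gam).
    by rewrite /M -powRrM mulVf ?gt_eqF // powRr1.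
  exact: powmono (ltW g2p) M0 MK.
have H3 : K `^ (2 - gam) * U `^ (2 - gam) <= T `^ (2 - gam).
  rewrite -powRM ?(ltW K0) ?(ltW U0) //; apply: powmono (ltW g2p) _ (ltW hT).
  by apply: mulr_ge0; exact: ltW.
have HT : T = T `^ (2 - gam) * T `^ (gam - 1).
  rewrite -powRD; last by rewrite (gt_eqF T0') implybT.
  have -> : 2 - gam + (gam - 1) = 1 by ring.
  by rewrite powRr1 // ltW.
have HU : U `^ (gam - 2) * U `^ (2 - gam) = 1.
  rewrite -powRD; last by rewrite (gt_eqF U0) implybT.
  have -> : gam - 2 + (2 - gam) = 0 by ring.
  by rewrite powRr0.
have L1 : C0 <= (gam - 1) * K `^ (2 - gam).
  rewrite -ler_pdivrMl //; by rewrite mulrC.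
have L2 : K `^ (2 - gam) <= U `^ (gam - 2) * T `^ (2 - gam).
  by have := ler_wpM2l e2 H3; rewrite mulrCA HU mulr1.
have L3 : C0 * T `^ (gam - 1) <= (gam - 1) * U `^ (gam - 2) * T.
  rewrite [X in _ <= _ * X]HT.
  apply: (le_trans (ler_wpM2r t1 L1)).
  rewrite -!mulrA; apply: ler_wpM2l; first exact: ltW.
  rewrite mulrA; apply: ler_wpM2r => //.
apply: (le_trans L3); rewrite lerDr; apply: mulr_ge0 => //; apply: mulr_ge0 => //; exact: ltW.
Qed.

End Scal.

Section Fin.
Variable R : realType.
Variable d : nat.

Lemma hess_symm (Om : set 'rV[R]_d) u x : open Om -> C2_on Om u -> Om x -> symm (hess u x).
Proof.
move=> oOm C2 Ox; apply/matrixP => i j; rewrite !mxE.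
have NO : nbhs x Om := open_nbhs_nbhs (conj oOm Ox).
have [_ [_ c]] := C2 x Ox.
apply: (clairaut _ (c j i) (c i j)).
apply: filterS NO => y Oy; have [d1 [d2 _]] := C2 y Oy.
by split; [exact: d1 | split; [exact: d2 | exact: d2]].
Qed.

Lemma derive_lincomb (f g : 'rV[R]_d -> R) (a : R) y v :
  derivable f y v -> derivable g y v ->
  'D_v (fun z => a * f z - g z) y = a * 'D_v f y - 'D_v g y.
Proof.
move=> df dg.
have -> : (fun z => a * f z - g z) = a *: f - g by apply/funext.
rewrite deriveB //; last exact: derivableZ.
by rewrite deriveZ.
Qed.

Lemma hess_lin (Om : set 'rV[R]_d) (u W : 'rV[R]_d -> R) (a : R) x :
  open Om -> Om x ->
  (forall y, Om y -> differentiable u y) -> (forall i, differentiable ('D_(evec R i) u) x) ->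
  (forall y i, derivable W y (evec R i)) -> (forall i j, derivable ('D_(evec R i) W) x (evec R j)) ->
  hess (fun y => a * u y - W y) x = a *: hess u x - hess W x.
Proof.
move=> oOm Ox du ddu dW ddW.
apply/matrixP => i j; rewrite !mxE.
have NO : nbhs x Om := open_nbhs_nbhs (conj oOm Ox).
have E : \forall y \near x, 'D_(evec R i) (fun y => a * u y - W y) y =
    (fun y => a * 'D_(evec R i) u y - 'D_(evec R i) W y) y.
  apply: filterS NO => y Oy /=; apply: derive_lincomb => //.
  exact: diff_derivable (du y Oy).
rewrite (near_eq_derive _ E) derive_lincomb //.
exact: diff_derivable.
Qed.


Lemma S0 (S : 'M[R]_d -> R) : linear_on_sym S -> S 0 = 0.
Proof.
move=> L; have := L 1 0 0 (@symm0 R d) (@symm0 R d).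
rewrite scale1r addr0 mul1r => H; lra.
Qed.

Lemma SN (S : 'M[R]_d -> R) M : linear_on_sym S -> symm M -> S (- M) = - S M.
Proof.
move=> L hM; have := L (-1) M 0 hM (@symm0 R d).
by rewrite addr0 scaleN1r (S0 L) addr0 mulN1r.
Qed.

Lemma S_bound (F S : 'M[R]_d -> R) A P (Lam : R) :
  unif_elliptic Lam F -> subdifferential F S A -> symm A -> psd P ->
  S P <= Lam * opnorm P.
Proof.
move=> UE [_ sub] hA hP.
apply: (le_trans (sub P hP.1)); exact: (UE A P hA hP).2.
Qed.
End Fin.

Lemma fin_ineq (R : realType) (a g U1 SH SW CT E : R) :
  a * U1 <= a * SH -> SW <= CT -> CT <= a * (2 - g) * U1 + E ->
  0 <= a * SH - SW - (a * (g - 1) * U1 - E).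
Proof. move=> h1 h2 h3; lra. Qed.

Lemma aux1 (R : realType) (p g : R) : p * (2 - g) = 1 -> p * (g - 1) = p - 1.
Proof. move=> h; lra. Qed.

Lemma aux2 (R : realType) (x a : R) : x + 1 <= a -> x <= a.
Proof. move=> h; lra. Qed.

Lemma aux3 (R : realType) (x a : R) : 0 <= x -> x + 1 <= a -> 0 <= a.
Proof. move=> h1 h2; lra. Qed.

End Helpers.
Import Helpers.

Theorem lemma2p9 (R : realType) (d : nat) (Lam gam : R) :
  (1 <= d)%N -> 1 <= Lam -> 1 < gam < 2 ->
  exists a0 : R, 0 < a0 /\
  forall (F : 'M[R]_d -> R), standing_assumptions Lam F ->
  forall (Om : set 'rV[R]_d) (u : 'rV[R]_d -> R) (x0 : 'rV[R]_d) (a : R),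
    domain Om -> SF gam F Om u -> a0 <= a ->
    forall x, Om x -> 0 < u x ->
    forall S, subdifferential F S (hess u x) ->
      0 <= Lu gam S u
             (fun y => a * u y - enorm (y - x0) `^ (2 / (2 - gam))) x.
Proof.
move=> _ Lam1 hg.
have /andP [g1 g2] := hg.
have g2p : 0 < 2 - gam by rewrite subr_gt0.
set p := 2 / (2 - gam) / 2.
have pE : p * (2 - gam) = 1 by rewrite /p; field; rewrite gt_eqF.
have p1 : 1 < p.
  have -> : p = (2 - gam)^-1 by rewrite /p; field; rewrite gt_eqF.
  by rewrite invf_gt1 // ltrBlDr -ltrBlDl (_ : 2 - 1 = 1 :> R) //; lra.
have p0 : 0 < p by apply: lt_trans p1.
set C0 := Lam * (4 * p * (p - 1) + 2 * p).
have Lam0 : 0 < Lam by apply: lt_le_trans Lam1.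
have C00 : 0 <= C0.
  by apply: mulr_ge0; [exact: ltW | apply: addr_ge0; apply: mulr_ge0 => //; [apply: mulr_ge0 => //; apply: ltW | apply: ltW; rewrite subr_gt0 | exact: ltW ]].
have K0 : 0 <= Kc C0 gam by apply: le_trans ler01 _; rewrite /Kc le_max lexx.
have A0 : 0 <= C0 * Kc C0 gam / (2 - gam).
  by apply: divr_ge0; [exact: mulr_ge0 | exact: ltW].
exists (C0 * Kc C0 gam / (2 - gam) + 1); split; first by lra.
move=> F [UE [cvx [F0 _]] _] Om u x0 a [oOm _] [C2 eqs] ha x Ox ux S subS.
have L := subS.1.
have hsym := hess_symm oOm C2 Ox.
have Ew : (fun y => a * u y - enorm (y - x0) `^ (2 / (2 - gam))) = (fun y => a * u y - Wf x0 p y).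
  by apply/funext => y; rewrite enorm_sq.
rewrite Ew /Lu /=.
rewrite (hess_lin a oOm Ox (fun y Oy => (C2 y Oy).1) (C2 x Ox).2.1); first last.
- by move=> i j; rewrite DW_eq //; case: (DG x0 p1 x i j).
- by move=> y i; case: (Dw x0 p1 y i).
have hW := hessW x0 p1 x.
set c := sq x0 x in hW *.
have c0 : 0 <= c := sq_ge0 x0 x.
have hWs : symm (hess (Wf x0 p) x).
  by rewrite hW; apply: symmD; apply: symmZ; [exact: symmZZ | exact: symm1].
have E1 : S (a *: hess u x - hess (Wf x0 p) x) = a * S (hess u x) - S (hess (Wf x0 p) x).
  by rewrite (L a _ _ hsym (symmN hWs)) (SN L hWs).
have SHu : u x `^ (gam - 1) <= S (hess u x).
  have := subS.2 _ (symmN hsym).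
  by rewrite addrN F0 (eqs x Ox).2 (SN L hsym) sub0r lerN2.
have pm1 : 0 < p - 1 by rewrite subr_gt0.
have SHW : S (hess (Wf x0 p) x) <= C0 * c `^ (p - 1).
  rewrite hW (L _ _ _ (symmZZ _) (symmZ _ (@symm1 R d))).
  have -> : S ((2 * p * c `^ (p - 1)) *: 1%:M) = (2 * p * c `^ (p - 1)) * S 1%:M.
    by have := L (2 * p * c `^ (p - 1)) 1%:M 0 (@symm1 R d) (@symm0 R d); rewrite !addr0 (S0 L) addr0.
  have SZ : S ((x - x0)^T *m (x - x0)) <= Lam * c.
    apply: (le_trans (S_bound UE subS hsym (psdZZ (x - x0)))).
    apply: ler_wpM2l; [exact: ltW | exact: opnormZZ].
  have S1 : S 1%:M <= Lam.
    apply: (le_trans (S_bound UE subS hsym (@psd1 R d))).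
    rewrite -[X in _ <= X]mulr1; apply: ler_wpM2l; [exact: ltW | exact: opnorm1].
  have k1 : 0 <= 4 * p * (p - 1) * c `^ (p - 1 - 1).
    by apply: mulr_ge0; [apply: mulr_ge0; [apply: mulr_ge0 => //; exact: ltW | exact: ltW] | exact: powR_ge0].
  have k2 : 0 <= 2 * p * c `^ (p - 1).
    by apply: mulr_ge0; [apply: mulr_ge0 => //; exact: ltW | exact: powR_ge0].
  apply: (le_trans (lerD (ler_wpM2l k1 SZ) (ler_wpM2l k2 S1))).
  have Hc : c * c `^ (p - 1 - 1) = c `^ (p - 1) := mulr_powRB1 c0 pm1.
  rewrite /C0 -Hc le_eqVlt; apply/orP; left; apply/eqP; ring.
have Tp : c `^ (p - 1) = (c `^ p) `^ (gam - 1).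
  by rewrite -powRrM aux1.
have g1p : 0 < gam - 1 by rewrite subr_gt0.
have HU : u x `^ (gam - 2) * u x = u x `^ (gam - 1).
  rewrite mulrC (_ : gam - 2 = gam - 1 - 1); last by ring.
  exact: mulr_powRB1 (ltW ux) g1p.
have ha' : C0 * Kc C0 gam / (2 - gam) <= a := aux2 ha.
have a0 : 0 <= a := aux3 A0 ha.
have SLi := SL hg C00 ux (powR_ge0 c p) ha'.
have aS : a * u x `^ (gam - 1) <= a * S (hess u x) by exact: ler_wpM2l.
rewrite E1 /Wf -/c.
have E2 : (gam - 1) * u x `^ (gam - 2) * (a * u x - c `^ p) =
   a * (gam - 1) * u x `^ (gam - 1) - (gam - 1) * u x `^ (gam - 2) * c `^ p.
  by rewrite -HU; ring.
rewrite E2; rewrite Tp in SHW.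
exact: fin_ineq aS SHW SLi.
Qed.
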